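(* Assume the setting in the context. Let $x_i,x_j,x_k\in X$ be distinct, and suppose $(x_i,x_j)$ is an invisible pair, i.e., for all $M\subseteq X\setminus\{x_i\}$, $N\subseteq X\setminus\{x_j\}$ and $G_1,G_2\in\mathcal G$, $x_i-G_1(M)\not\perp\!\!\!\perp x_j-G_2(N)$. If $x_k$ is an ancestor of $x_i$ and $x_k\perp\!\!\!\perp x_j\mid x_i$, then $x_i$ is an ancestor of $x_j$.
   Context: Model: $X$ is a finite set of observed random variables and $U$ a finite set of unobserved random variables; $V=X\cup U$ and $G=(V,E)$ is a DAG on $V$. Each $v_i\in V$ satisfies $v_i=\sum_{x_j\in \mathrm{pa}(v_i)\cap X} f^{(i)}_j(x_j)+\sum_{u_k\in\mathrm{pa}(v_i)\cap U} f^{(i)}_k(u_k)+n_i$, where the $f$'s are nonlinear functions and the external noises $n_i$ are jointly independent. ''Parent'', ''ancestor'', ''path'', ''d-separation'' refer to $G$ (a path has distinct vertices). Causal Faithfulness Condition (CFC): any conditional independence among variables of $V$ that is not entailed by d-separation in $G$ does not hold. $\perp\!\!\!\perp$ denotes statistical independence, $\not\perp\!\!\!\perp$ dependence. Function class: $\mathcal G$ is a class of generalized additive functions: for $G\in\mathcal G$ and a set $M$ of observed variables, $G(M)=\sum_{x_m\in M} g_m(x_m)$ (with $G(\emptyset)=0$). It satisfies: for any $x_i,x_j\in X$, sets $M,N\subseteq X$, $G_1,G_2\in\mathcal G$ and external noise $n_k$, if $n_k\not\perp\!\!\!\perp x_i-G_1(M)$ and $n_k\not\perp\!\!\!\perp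 x_j-G_2(N)$ then $x_i-G_1(M)\not\perp\!\!\!\perp x_j-G_2(N)$. Definitions, for $X'\subseteq X$ and $x_i,x_j\in X'$: an unobserved causal path (UCP) from $x_i$ to $x_j$ w.r.t. $X'$ is a directed path $x_i\to\cdots\to v_k\to x_j$ in $G$ with $v_k\notin X'$; an unobserved backdoor path (UBP) between $x_i$ and $x_j$ w.r.t. $X'$ is a path $x_i\leftarrow v_k\leftarrow\cdots\leftarrow v\to\cdots\to v_l\to x_j$ with $v_k,v_l\notin X'$ (allowing $v=v_k$, $v=v_l$, or $v=v_k=v_l$; $v$ may be in $X'$). ''UBP/UCP between $x_i$ and $x_j$'' means a UBP or a UCP in either direction. $(x_i,x_j)$ is invisible w.r.t. $X'$ if there is a UBP/UCP between them w.r.t. $X'$. When $X'$ is omitted, $X'=X$. Standing fact (taken as known), for $X'\subseteq X$ and distinct $x_i,x_j\in X'$: (F3) $(x_i,x_j)$ is invisible w.r.t. $X'$ iff for all $M\subseteq X'\setminus\{x_i\}$, $N\subseteq X'\setminus\{x_j\}$, $G_1,G_2\in\mathcal G$: $x_i-G_1(M)\not\perp\!\!\!\perp x_j-G_2(N)$. *)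

(* Defs.v *)
From HB Require Import structures.
From mathcomp Require Import all_boot all_order all_algebra.
From mathcomp Require Import all_classical all_reals all_analysis.
Set Implicit Arguments. Unset Strict Implicit. Unset Printing Implicit Defensive.
Import Order.TTheory GRing.Theory Num.Theory.
Local Open Scope classical_set_scope.
Local Open Scope ring_scope.

(* E u v means the edge u -> v.                                       *)
Section Graph.
Context {V : finType} (E : rel V).

Definition acyclic : Prop := forall u v, E u v -> ~~ connect E v u.

Definition ancestor (a b : V) : Prop := connect E a b.

Definition adjacent (u v : V) : bool := E u v || E v u.

Definition dconnected (C : {set V}) (a b : V) : Prop :=
  exists s : seq V,
    [/\ uniq (a :: s), last a s = b, path adjacent a s &
     forall n, (n.+2 < size (a :: s))%N ->
       let u := nth a (a :: s) n in
       let w := nth a (a :: s) n.+1 in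
       let z := nth a (a :: s) n.+2 in
       (E u w && E z w -> exists2 t, connect E w t & t \in C) /\
       (~~ (E u w && E z w) -> w \notin C)].

Definition dsep (A B C : {set V}) : Prop :=
  forall a b, a \in A -> b \in B -> ~ dconnected C a b.

Definition UCP (X' : {set V}) (a b : V) : Prop :=
  exists (t : seq V) (v : V),
    [/\ path E a (rcons (rcons t v) b), uniq (a :: rcons (rcons t v) b)
      & v \notin X'].

(* Unobserved backdoor path between a and b w.r.t. X':
   a <- vk <- ... <- v -> ... -> vl -> b with vk, vl not in X'.
   The left branch is the directed path v :: p (ending at vk = last v p),
   the right branch is the directed path v :: q (ending at vl = last v q);
   v = vk and/or v = vl are allowed (p or q empty); v may lie in X'. *)
Definition UBP (X' : {set V}) (a b : V) : Prop :=
  exists (v : V) (p q : seq V),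
    [/\ [/\ path E v p, E (last v p) a & last v p \notin X'],
         [/\ path E v q, E (last v q) b & last v q \notin X']
      & uniq (a :: rev (v :: p) ++ rcons q b)].

Definition invisible (X' : {set V}) (a b : V) : Prop :=
  UBP X' a b \/ UCP X' a b \/ UCP X' b a.

End Graph.

Section Prob.
Context {d : measure_display} {Omega : measurableType d} {R : realType}
        (P : probability Omega R).

Definition indep (Y Z : Omega -> R) : Prop :=
  forall A B : set R, measurable A -> measurable B ->
    P (Y @^-1` A `&` Z @^-1` B) = (P (Y @^-1` A) * P (Z @^-1` B))%E.

Definition dep (Y Z : Omega -> R) : Prop := ~ indep Y Z.

Definition mutually_indep {I : finType} (Y : I -> Omega -> R) : Prop :=
  forall (S : {set I}) (B : I -> set R), (forall i, measurable (B i)) ->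
    P (\big[setI/setT]_(i in S) (Y i @^-1` B i)) =
    (\prod_(i in S) P (Y i @^-1` B i))%E.

Context {V : finType} (var : V -> Omega -> R).

Definition sigma_of (S : {set V}) : set (set Omega) :=
  <<s [set F | exists v, v \in S /\
                 exists B : set R, measurable B /\ F = var v @^-1` B] >>.

(* conditional independence of the variables in A and those in B given
   those in C:  for every event Ev in sigma(A), P(Ev | sigma(B u C)) has a
   sigma(C)-measurable version h; by a pi-lambda argument it suffices to
   test the defining identity on the generating pi-system F `&` G. *)
Definition cond_indep (A B C : {set V}) : Prop :=
  forall Ev, sigma_of A Ev ->
    exists h : Omega -> R,
      [/\ forall D : set R, measurable D -> sigma_of C (h @^-1` D),
          P.-integrable setT (EFin \o h)
        & forall F G, sigma_of B F -> sigma_of C G ->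
            P (Ev `&` F `&` G) = (\int[P]_(w in F `&` G) (h w)%:E)%E].

Definition GA (g : V -> R -> R) (M : {set V}) : Omega -> R :=
  fun w => \sum_(m in M) g m (var m w).

Definition resid (i : V) (g : V -> R -> R) (M : {set V}) : Omega -> R :=
  fun w => var i w - GA g M w.

End Prob.

Definition nonlinear {R : realType} (h : R -> R) : Prop :=
  ~ exists a b : R, forall x, h x = a * x + b.

(* Main.v *)
Require Import Defs.
From HB Require Import structures.
From mathcomp Require Import all_boot all_order all_algebra.
From mathcomp Require Import all_classical all_reals all_analysis.

Definition Tr {V : finType} (E : rel V) (i u w z : V) : bool :=
  ((w != i) && (E w u || E w z)) || [&& E u w, E z w & connect E w i].

Definition Qd {V : finType} (E : rel V) (i : V) (L : seq V) : Prop :=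
  path (Defs.adjacent E) (head i L) (behead L) /\
  forall n, (n.+2 < size L)%N ->
    Tr E i (nth i L n) (nth i L n.+1) (nth i L n.+2).

Lemma Qd1 (V : finType) (E : rel V) i (x : V) : Qd E i [:: x].
Proof. by split=> // n. Qed.

Lemma Qd_cons (V : finType) (E : rel V) i (u w : V) s :
  Qd E i (w :: s) -> Defs.adjacent E u w ->
  ((0 < size s)%N -> Tr E i u w (nth i s 0)) -> Qd E i (u :: w :: s).
Proof.
move=> [Hp Hn] Ha Ht; split; first by rewrite /= Ha.
case=> [|n] /= Hs; first by apply: Ht.
exact: (Hn n).
Qed.

Lemma Qd_dcon (V : finType) (E : rel V) i (k : V) s :
  acyclic E -> uniq (k :: s) -> Qd E i (k :: s) ->
  dconnected E [set i] k (last k s).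
Proof.
move=> Hac Hu [Hp Hn]; exists s; split=> // n Hs; cbv zeta.
have := Hn n Hs; rewrite /Tr.
set u := nth i _ n; set w := nth i _ n.+1; set z := nth i _ n.+2.
have -> : nth k (k :: s) n = u.
  by apply: set_nth_default; apply: ltn_trans Hs; apply: ltn_trans (ltnSn _).
have -> : nth k (k :: s) n.+1 = w by apply: set_nth_default; apply: ltn_trans Hs.
have -> : nth k (k :: s) n.+2 = z by apply: set_nth_default.
case/orP=> [/andP [Hwi Hout]|/and3P [Huw Hzw Hc]].
  have Hnc : ~~ (E u w && E z w).
    apply/negP=> /andP [Huw Hzw]; case/orP: Hout => Hw.
      by have := Hac _ _ Huw; rewrite (connect1 Hw).
    by have := Hac _ _ Hzw; rewrite (connect1 Hw).
  by split=> [H|_]; [rewrite H in Hnc | rewrite inE].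
split; first by move=> _; exists i => //; rewrite inE.
by rewrite Huw Hzw.
Qed.

Definition HPd {V : finType} (E : rel V) (i v : V) (s : seq V) : Prop :=
  (0 < size s)%N -> forall z, E z v -> Tr E i z v (nth i s 0).

Lemma fwd (V : finType) (E : rel V) (i j : V) b v :
  path E v b -> last v b = j -> i \notin v :: b ->
  Qd E i (v :: b) /\ HPd E i v b.
Proof.
elim: b v => [|x b IH] v /=; first by move=> *; split; [exact: Qd1|].
move=> /andP [Hvx Hp] Hl; rewrite !inE negb_or => /andP [Hvi Hxi].
have [HQ HH] := IH x Hp Hl Hxi.
split.
  apply: Qd_cons => //; first by rewrite /Defs.adjacent Hvx.
  by move=> Hs; apply: HH.
by move=> _ z Hz; rewrite /Tr eq_sym Hvi Hvx orbT.
Qed.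

Lemma beta (V : finType) (E : rel V) (i j : V) b v :
  path E v b -> last v b = j -> i \notin v :: b -> uniq (v :: b) ->
  forall y, y \in v :: b -> exists s,
    [/\ uniq (y :: s), last y s = j, Qd E i (y :: s), HPd E i y s
      & {subset y :: s <= v :: b}].
Proof.
elim: b v => [|x b IH] v Hp Hl Hi Hu y Hy.
  have [HQ HH] := @fwd _ _ i j _ _ Hp Hl Hi.
  move: Hy; rewrite mem_seq1 => /eqP ->; by exists [::]; split.
move: Hy; rewrite inE => /orP [/eqP ->|Hy].
  have [HQ HH] := @fwd _ _ i j _ _ Hp Hl Hi; by exists (x :: b); split.
move: Hp => /= /andP [_ Hp].
have Hi' : i \notin x :: b by move: Hi; rewrite inE negb_or => /andP [].
have Hu' : uniq (x :: b) by move: Hu => /andP [].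
have [s [H1 H2 H3 H4 H5]] := IH x Hp Hl Hi' Hu' y Hy.
exists s; split=> // w Hw; rewrite inE H5 ?orbT //.
Qed.

Lemma alpha (V : finType) (E : rel V) (i j : V) v b a :
  path E v b -> last v b = j -> i \notin v :: b ->
  path E v a -> uniq (v :: a ++ b) -> i \notin belast v a ->
  (forall x, x \in a -> connect E x i) ->
  forall y, y \in v :: a -> exists s,
    [/\ uniq (y :: s), last y s = j, Qd E i (y :: s), HPd E i y s
      & {subset y :: s <= v :: a ++ b}].
Proof.
move=> Hpb Hlb Hib.
elim/last_ind: a => [|a y' IH] Hpa Hu Hi Hc y Hy.
  move: Hy; rewrite mem_seq1 => /eqP ->.
  have [HQ HH] := @fwd _ _ i j _ _ Hpb Hlb Hib.
  by exists b; split.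
move: Hpa; rewrite rcons_path => /andP [Hpa Hly].
have Hperm : perm_eq ((v :: a) ++ [:: y'] ++ b) ([:: y'] ++ (v :: a) ++ b).
  by rewrite perm_catCA.
have : uniq (y' :: v :: a ++ b).
  by rewrite -(perm_uniq Hperm) /= -cat_rcons.
rewrite cons_uniq => /andP [Hy'n Hu'].
have Hi' : i \notin belast v a.
  apply/negP=> /mem_belast H; move: Hi; by rewrite belast_rcons H.
have Hc' : forall x, x \in a -> connect E x i.
  by move=> x Hx; apply: Hc; rewrite mem_rcons inE Hx orbT.
have Hsub : {subset v :: a ++ b <= v :: rcons a y' ++ b}.
  move=> x; rewrite !inE !mem_cat mem_rcons inE.
  by case/orP=> [->|/orP [->|->]]; rewrite ?orbT.
move: Hy; rewrite -rcons_cons mem_rcons inE => /orP [/eqP ->|Hy]; last first.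
  have [s [H1 H2 H3 H4 H5]] := IH Hpa Hu' Hi' Hc' y Hy.
  by exists s; split=> // x Hx; apply: Hsub; apply: H5.
set c := last v a.
have Hcin : c \in v :: a by apply: mem_last.
have [s [H1 H2 H3 H4 H5]] := IH Hpa Hu' Hi' Hc' c Hcin.
have Hci : c != i.
  apply/negP=> /eqP Hci; move: Hi; rewrite belast_rcons -Hci.
  by rewrite Hcin.
exists (c :: s); split.
- rewrite cons_uniq H1 andbT; apply/negP=> /H5 H; by rewrite H in Hy'n.
- by [].
- apply: Qd_cons => //; first by rewrite /Defs.adjacent Hly orbT.
  by move=> _; rewrite /Tr Hci Hly.
- move=> _ z Hz /=; rewrite /Tr Hz Hly Hc ?orbT //.
  by rewrite mem_rcons inE eqxx.
- move=> x; rewrite inE => /orP [/eqP ->|/H5 /Hsub //].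
  by rewrite inE mem_cat mem_rcons inE eqxx orbT.
Qed.

Lemma pistep (V : finType) (E : rel V) (i j : V) (Z : seq V) :
  i \in Z ->
  (forall y, y \in Z -> exists s,
    [/\ uniq (y :: s), last y s = j, Qd E i (y :: s), HPd E i y s
      & {subset y :: s <= Z}]) ->
  forall p x, path E x p -> last x p = i -> uniq (x :: p) -> exists s,
    [/\ uniq (x :: s), last x s = j, Qd E i (x :: s), HPd E i x s
      & {subset x :: s <= x :: p ++ Z}].
Proof.
move=> HiZ HZ; elim=> [|x' p IH] x Hp Hl Hu.
  move: Hl => /= Hl; subst x.
  have [s [H1 H2 H3 H4 H5]] := HZ i HiZ.
  by exists s; split=> // y /H5 Hy; rewrite inE Hy orbT.
have [HxZ|HxZ] := boolP (x \in Z).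
  have [s [H1 H2 H3 H4 H5]] := HZ x HxZ.
  by exists s; split=> // y /H5 Hy; rewrite inE mem_cat Hy !orbT.
move: Hp => /= /andP [Hxx' Hp].
move: Hu; rewrite cons_uniq => /andP [Hxn Hu].
have [s [H1 H2 H3 H4 H5]] := IH x' Hp Hl Hu.
have Hxi : x != i by apply/negP=> /eqP Hx; rewrite Hx HiZ in HxZ.
exists (x' :: s); split.
- apply/andP; split=> //; apply/negP=> /H5.
  rewrite -cat_cons mem_cat => /orP [H|H]; [by rewrite H in Hxn | by rewrite H in HxZ].
- by [].
- apply: Qd_cons => //; first by rewrite /Defs.adjacent Hxx'.
  by move=> Hs; apply: H4.
- by move=> _ z Hz; rewrite /Tr Hxi Hxx' orbT.
- move=> y; rewrite inE => /orP [/eqP ->|/H5]; first by rewrite inE eqxx.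
  by rewrite !inE mem_cat => ->; rewrite orbT.
Qed.

Lemma path_connect_last (V : finType) (E : rel V) v a x :
  path E v a -> x \in a -> connect E x (last v a).
Proof.
move=> Hp Hx; move: Hp; case/splitPr: Hx => a1 a2.
rewrite cat_path last_cat /= => /andP [_ /andP [_ Hp]].
by apply/connectP; exists a2.
Qed.

Lemma graph_main (V : finType) (E : rel V) (i j k : V) v al be :
  acyclic E ->
  path E v al -> last v al = i -> path E v be -> last v be = j ->
  uniq (v :: al ++ be) -> i \notin belast v al -> i \notin v :: be ->
  connect E k i -> dconnected E [set i] k j.
Proof.
move=> Hac Hpa Hla Hpb Hlb Hu Hia Hib Hki.
set Z := v :: al ++ be.
have HiZ : i \in Z by rewrite /Z -cat_cons mem_cat -Hla mem_last.
have Hub : uniq (v :: be).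
  move: Hu; rewrite /= mem_cat negb_or cat_uniq => /andP [/andP [_ ->] /and3P [_ _ ->]].
  by [].
have HZ : forall y, y \in Z -> exists s,
    [/\ uniq (y :: s), last y s = j, Qd E i (y :: s), HPd E i y s
      & {subset y :: s <= Z}].
  move=> y Hy.
  have [Hya|Hya] := boolP (y \in v :: al).
    apply: (@alpha _ _ i j v be al) => //.
    by move=> x Hx; rewrite -Hla; apply: path_connect_last.
  have Hyb : y \in v :: be.
    move: Hy Hya; rewrite /Z !inE mem_cat.
    by case: (y == v) (y \in al) (y \in be) => [] [] [].
  have [s [H1 H2 H3 H4 H5]] := @beta _ _ i j be v Hpb Hlb Hib Hub y Hyb.
  exists s; split=> // x /H5; rewrite !inE mem_cat.
  by case/orP=> [->//|->]; rewrite !orbT.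
have [p' [Hp' Hl Hu']] : exists p, [/\ path E k p, last k p = i & uniq (k :: p)].
  move/connectP: Hki => [p Hp ->].
  by case: (shortenP Hp) => p' Hp' Hu' _; exists p'.
have [s [H1 H2 H3 _ _]] := @pistep _ _ i j Z HiZ HZ p' k Hp' Hl Hu'.
by rewrite -H2; apply: Qd_dcon.
Qed.

Import Order.TTheory GRing.Theory Num.Theory.
Local Open Scope classical_set_scope.
Local Open Scope ring_scope.

Theorem corollary1
  (d : measure_display) (Omega : measurableType d) (R : realType)
  (P : probability Omega R)
  (V : finType) (X : {set V})            (* X observed, ~: X = U unobserved *)
  (E : rel V)                            (* the DAG G on V *)
  (var : V -> Omega -> R)                (* the variables v_i *)
  (noise : V -> Omega -> R)              (* the external noises n_i *)
  (f : V -> V -> R -> R)                 (* f i j = f^(i)_j *)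
  (Gcl : set (V -> R -> R))              (* the class \mathcal G *)
  (* model *)
  (HDAG : acyclic E)
  (Hsem : forall i w, var i w = \sum_(j | E j i) f i j (var j w) + noise i w)
  (Hf_meas : forall i j, E j i -> measurable_fun setT (f i j))
  (Hf_nonlin : forall i j, E j i -> nonlinear (f i j))
  (Hnoise_meas : forall i, measurable_fun setT (noise i))
  (Hnoise_indep : mutually_indep P noise)
  (* Causal Faithfulness Condition *)
  (HCFC : forall A B C : {set V},
      [disjoint A & B]%B -> [disjoint A & C]%B -> [disjoint B & C]%B ->
      cond_indep P var A B C -> dsep E A B C)
  (* the function class *)
  (HGmeas : forall g, Gcl g -> forall m, measurable_fun setT (g m))
  (HGprop : forall (a b k : V) (M N : {set V}) (g1 g2 : V -> R -> R),
      a \in X -> b \in X -> M \subset X -> N \subset X -> Gcl g1 -> Gcl g2 ->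
      dep P (noise k) (resid var a g1 M) -> dep P (noise k) (resid var b g2 N) ->
      dep P (resid var a g1 M) (resid var b g2 N))
  (* standing fact (F3) *)
  (HF3 : forall (X' : {set V}) (a b : V), X' \subset X -> a \in X' -> b \in X' ->
      a != b ->
      (invisible E X' a b <->
       forall (M N : {set V}) (g1 g2 : V -> R -> R),
         M \subset X' :\ a -> N \subset X' :\ b -> Gcl g1 -> Gcl g2 ->
         dep P (resid var a g1 M) (resid var b g2 N)))
  (* the corollary *)
  (i j k : V) (Hi : i \in X) (Hj : j \in X) (Hk : k \in X)
  (Hij : i != j) (Hik : i != k) (Hjk : j != k)
  (Hinv : forall (M N : {set V}) (g1 g2 : V -> R -> R),
      M \subset X :\ i -> N \subset X :\ j -> Gcl g1 -> Gcl g2 ->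
      dep P (resid var i g1 M) (resid var j g2 N))
  (Hanc : ancestor E k i)
  (HCI : cond_indep P var [set k] [set j] [set i]) :
  ancestor E i j.
Proof.
have Hinvis : invisible E X i j.
  by apply/(HF3 X i j (subxx X) Hi Hj Hij); exact: Hinv.
have Hds : dsep E [set k] [set j] [set i].
  by apply: HCFC => //; rewrite disjoints1 inE eq_sym.
have Hnd : ~ dconnected E [set i] k j by apply: Hds; rewrite inE.
rewrite /ancestor.
case: Hinvis => [[v [p [q [[Hpp Hlp _] [Hpq Hlq _] Hu]]]]|[[t [v [Hp Hu Hv]]]|[t [v [Hp Hu Hv]]]]].
- exfalso; apply: Hnd.
  have Hperm : perm_eq (i :: rev (v :: p)) (v :: rcons p i).
    by rewrite -rcons_cons perm_sym perm_rcons perm_cons perm_sym perm_rev.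
  have Hu' : uniq (v :: rcons p i ++ rcons q j).
    by rewrite -cat_cons -(perm_uniq (perm_cat Hperm (perm_refl (rcons q j)))).
  move: Hu; rewrite cons_uniq mem_cat mem_rev negb_or => /andP [/andP [Hi1 Hi2] _].
  apply: (@graph_main _ E i j k v (rcons p i) (rcons q j) HDAG).
  + by rewrite rcons_path Hpp Hlp.
  + by rewrite last_rcons.
  + by rewrite rcons_path Hpq Hlq.
  + by rewrite last_rcons.
  + exact: Hu'.
  + by rewrite belast_rcons.
  + by rewrite inE negb_or Hi2 andbT; move: Hi1; rewrite inE negb_or => /andP [].
  + exact: Hanc.
- by apply/connectP; exists (rcons (rcons t v) j) => //; rewrite last_rcons.
- exfalso; apply: Hnd.
  apply: (@graph_main _ E i j k j (rcons (rcons t v) i) [::] HDAG).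
  + exact: Hp.
  + by rewrite last_rcons.
  + by [].
  + by [].
  + by rewrite cats0.
  + by move: Hu; rewrite -rcons_cons rcons_uniq belast_rcons => /andP [].
  + by rewrite mem_seq1.
  + exact: Hanc.
Qed.
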